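(* Let $R$ be a discrete valuation ring with residue field $k$ and fraction field $K$. Let $\widetilde{\mathfrak v}=(\widetilde V_i,\tilde v_i,\tilde v^i)_{i\in\mathbb Z}$ be a smoothing over $R$ of a colinked chain $\mathfrak v=(V_i,v_i,v^i)_{i\in\mathbb Z}$ with finite cosupport, and let $\mathfrak w=(W_i)_{i\in\mathbb Z}$ be an exact subrepresentation of $\mathfrak v$ of pure dimension $1$. Then there is a subrepresentation $\widetilde{\mathfrak w}\subseteq\widetilde{\mathfrak v}$ specializing to $\mathfrak w$, i.e. there are submodules $\widetilde W_i\subseteq\widetilde V_i$, each generated by an element $x_i$ whose residue in $V_i$ generates $W_i$, such that $\tilde v^i(\widetilde W_i)\subseteq\widetilde W_{i+1}$ and $\tilde v_i(\widetilde W_{i+1})\subseteq\widetilde W_i$ for all $i\in\mathbb Z$.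
   Context: $\mathcal Z$ is the quiver with vertex set $\mathbb Z$ and arrows $\alpha^i\colon i\to i+1$, $\alpha_i\colon i+1\to i$ ($i\in\mathbb Z$). A representation $(V_i,v_i,v^i)$ of $\mathcal Z$ in a category consists of objects $V_i$ and morphisms $v^i\colon V_i\to V_{i+1}$, $v_i\colon V_{i+1}\to V_i$. Over $k$ (finite-dimensional vector spaces), compositions $v^i_j$ are $v^{j-1}\circ\cdots\circ v^i$ ($j>i$), $v_j\circ\cdots\circ v_{i-1}$ ($j<i$), identity ($j=i$). A colinked chain satisfies $v_iv^i=0$, $v^iv_i=0$ and $\mathrm{Im}(v_i)+\mathrm{Im}(v^{i-1})=V_i$ for all $i$. A finite cosupport is a finite $H\subseteq\mathbb Z$ such that for each $i$ there is $j\in H$ with $v^i_j$ injective. A subrepresentation $\mathfrak w$ is a family of subspaces $W_i\subseteq V_i$ with $v^i(W_i)\subseteq W_{i+1}$, $v_i(W_{i+1})\subseteq W_i$; it has pure dimension $1$ if all $W_i$ are one-dimensional, and is exact if the restricted maps $w^i,w_i$ satisfy $\ker(w^i)=\mathrm{Im}(w_i)$, $\ker(w_i)=\mathrm{Im}(w^i)$ for all $i$. A representation of $\mathcal Z$ over a field is general if $v_i\circ v^i$ and $v^i\circ v_i$ are nonzero scalar multiples of the identity for every $i$. If $\widetilde{\mathfrak v}$ is a representation of $\mathcal Z$ in free $R$-modules of finite rank, its specialization is $\widetilde{\mathfrak v}\otimes_R k$; $\widetilde{\mathfrak v}$ is a smoothing of $\mathfrak v$ over $R$ if $\widetilde{\mathfrak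 v}\otimes_R k=\mathfrak v$ and $\widetilde{\mathfrak v}\otimes_R K$ is general. *)

(* Defs.v *)
From HB Require Import structures.
From mathcomp Require Import all_boot all_order all_algebra.
Set Implicit Arguments. Unset Strict Implicit. Unset Printing Implicit Defensive.
Import Order.TTheory GRing.Theory Num.Theory.
Local Open Scope ring_scope.

(* Conventions: V_i = 'rV[F]_(n i) (row vectors); a linear map V_i -> V_j is a
   matrix A acting on the right (x |-> x *m A).
   vu i : V_i -> V_(i+1)  is  v^i ,   vl i : V_(i+1) -> V_i  is  v_i. *)

Section Chains.
Variables (F : fieldType) (n : int -> nat).
Variables (vu : forall i : int, 'M[F]_(n i, n (i + 1)))
          (vl : forall i : int, 'M[F]_(n (i + 1), n i)).

(* colinked chain: v_i v^i = 0, v^i v_i = 0, Im v_i + Im v^(i-1) = V_i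
   (the last condition is stated at index i+1, for all i : int) *)
Definition colinked : Prop :=
  forall i : int,
    [/\ vu i *m vl i = 0, vl i *m vu i = 0
      & ((vl (i + 1)%R + vu i)%MS == 1%:M)%MS].

Definition chain_state := {i : int & 'rV[F]_(n i)}.

Definition fstep (s : chain_state) : chain_state :=
  Tagged (fun i => 'rV[F]_(n i)) (tagged s *m vu (tag s)).

Definition bcast (i : int) (x : 'rV[F]_(n i)) : 'rV[F]_(n (i - 1 + 1)) :=
  castmx (erefl 1%N, congr1 n (esym (subrK 1 i))) x.

Definition bstep (s : chain_state) : chain_state :=
  Tagged (fun i => 'rV[F]_(n i)) (bcast (tagged s) *m vl (tag s - 1)).

(* image of x : V_i under the composite v^i_j : V_i -> V_j *)
Definition comp_at (i j : int) (x : 'rV[F]_(n i)) : chain_state :=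
  if i <= j then iter (absz (j - i)) fstep (Tagged (fun i => 'rV[F]_(n i)) x)
  else iter (absz (j - i)) bstep (Tagged (fun i => 'rV[F]_(n i)) x).

Arguments comp_at : clear implicits.

Definition comp_injective (i j : int) : Prop :=
  forall x : 'rV[F]_(n i), x != 0 -> tagged (comp_at i j x) != 0.

Definition finite_cosupport (H : seq int) : Prop :=
  forall i : int, exists2 j, j \in H & comp_injective i j.

Definition general_rep : Prop :=
  forall i : int,
    (exists2 c : F, c != 0 & vu i *m vl i = c%:M) /\
    (exists2 d : F, d != 0 & vl i *m vu i = d%:M).

(* subrepresentation: W_i is the row space of W i *)
Definition subrep (W : forall i : int, 'M[F]_(n i)) : Prop :=
  forall i : int, (W i *m vu i <= W (i + 1)%R)%MS /\ (W (i + 1)%R *m vl i <= W i)%MS.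

Definition pure_dim1 (W : forall i : int, 'M[F]_(n i)) : Prop :=
  forall i : int, \rank (W i) = 1%N.

Definition exact_subrep (W : forall i : int, 'M[F]_(n i)) : Prop :=
  forall i : int,
    ((W i :&: kermx (vu i)) == W (i + 1)%R *m vl i)%MS /\
    ((W (i + 1)%R :&: kermx (vl i)) == W i *m vu i)%MS.

End Chains.

Definition is_DVR (R : idomainType) : Prop :=
  exists pi : R, [/\ pi != 0, pi \isn't a GRing.unit &
    forall a : R, a != 0 -> exists (u : R) (m : nat),
      u \is a GRing.unit /\ a = u * pi ^+ m].

(* red : R -> k is the residue map: surjective with kernel the maximal ideal
   (= the non-units of the local ring R) *)
Definition residue_map (R : idomainType) (k : fieldType)
  (red : {rmorphism R -> k}) : Prop :=
  (forall y : k, exists a : R, red a = y) /\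
  (forall a : R, (red a == 0) = (a \isn't a GRing.unit)).

Definition fraction_map (R : idomainType) (K : fieldType)
  (iota : {rmorphism R -> K}) : Prop :=
  injective iota /\
  (forall z : K, exists a b : R, b != 0 /\ z = iota a / iota b).

Definition smoothing (R : idomainType) (k K : fieldType)
  (red : {rmorphism R -> k}) (iota : {rmorphism R -> K}) (n : int -> nat)
  (Vu : forall i : int, 'M[R]_(n i, n (i + 1)))
  (Vl : forall i : int, 'M[R]_(n (i + 1), n i))
  (vu : forall i : int, 'M[k]_(n i, n (i + 1)))
  (vl : forall i : int, 'M[k]_(n (i + 1), n i)) : Prop :=
  (forall i : int, map_mx red (Vu i) = vu i /\ map_mx red (Vl i) = vl i) /\
  general_rep (fun i => map_mx iota (Vu i)) (fun i => map_mx iota (Vl i)).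

(* Main.v *)
Require Import Defs.
From HB Require Import structures.
From mathcomp Require Import all_boot all_order all_algebra zify ring.
From Stdlib Require Import ClassicalEpsilon.
Set Implicit Arguments. Unset Strict Implicit. Unset Printing Implicit Defensive.
Import Order.TTheory GRing.Theory Num.Theory.
Local Open Scope ring_scope.

Section Gen.
Variables (R : idomainType) (k : fieldType) (red : {rmorphism R -> k}).
Hypothesis red_surj : forall y : k, exists a : R, red a = y.
Hypothesis red_ker : forall a : R, (red a == 0) = (a \isn't a GRing.unit).
Variable pi : R.
Hypothesis pi_nu : pi \isn't a GRing.unit.
Hypothesis dvr : forall a : R, a != 0 -> exists (u : R) (m : nat),
      u \is a GRing.unit /\ a = u * pi ^+ m.

Lemma red_pi : red pi = 0.
Proof. by apply/eqP; rewrite red_ker. Qed.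

Lemma red_unit a : red a != 0 -> a \is a GRing.unit.
Proof. by rewrite red_ker negbK. Qed.

Lemma div_pi a : red a = 0 -> exists c, a = pi * c.
Proof.
move=> ha; have [->|a0] := eqVneq a 0; first by exists 0; rewrite mulr0.
have [u [m [uu ea]]] := dvr a0; rewrite ea in ha *; case: m ea ha => [|m] ea ha.
  by move/eqP: ha; rewrite red_ker expr0 mulr1 uu.
by exists (u * pi ^+ m); rewrite exprS mulrCA.
Qed.

Lemma mx_div_pi a b (v : 'M[R]_(a, b)) : map_mx red v = 0 -> exists w, v = pi *: w.
Proof.
move=> hv.
have ex : forall i j, exists c, v i j == pi * c.
  move=> i j; have h : red (v i j) = 0.
    by move/matrixP: hv => /(_ i j); rewrite !mxE.
  by have [c hc] := div_pi h; exists c; apply/eqP.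
exists (\matrix_(i, j) xchoose (ex i j)); apply/matrixP => i j.
by rewrite !mxE; apply/eqP; exact: xchooseP (ex i j).
Qed.

Lemma mx_lift a b (v : 'M[k]_(a, b)) : exists w : 'M[R]_(a, b), map_mx red w = v.
Proof.
have ex : forall i j, exists c, red c == v i j.
  by move=> i j; have [c hc] := red_surj (v i j); exists c; apply/eqP.
exists (\matrix_(i, j) xchoose (ex i j)); apply/matrixP => i j.
by rewrite !mxE; apply/eqP; exact: xchooseP (ex i j).
Qed.

Lemma map_pi a b (v : 'M[R]_(a, b)) : map_mx red (pi *: v) = 0.
Proof. by rewrite map_mxZ red_pi scale0r. Qed.

Lemma nakayama m (P : 'rV[R]_m -> Prop) :
  P 0 -> (forall x y, P x -> P y -> P (x + y)) -> (forall c x, P x -> P (c *: x)) ->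
  (forall z, exists x y, P x /\ z = x + pi *: y) -> forall z, P z.
Proof.
move=> P0 PD PZ hz z.
have ex : forall j : 'I_m, {xy : 'rV[R]_m * 'rV[R]_m | P xy.1 /\ delta_mx 0 j = xy.1 + pi *: xy.2}.
  move=> j; apply: constructive_indefinite_description.
  by have [x [y [Px e]]] := hz (delta_mx 0 j); exists (x, y).
pose X := \matrix_(j < m) (sval (ex j)).1.
pose Y := \matrix_(j < m) (sval (ex j)).2.
have XY : 1%:M = X + pi *: Y.
  apply/matrixP => i j; rewrite !mxE.
  case: (svalP (ex i)) => _ /matrixP /(_ 0 j); rewrite !mxE eqxx /= => <-.
  by rewrite eq_sym.
have Xu : X \in unitmx.
  rewrite unitmxE; apply: red_unit.
  have : map_mx red X = 1%:M.
    by rewrite -[X](addrK (pi *: Y)) -XY map_mxB map_pi subr0 map_scalar_mx rmorph1.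
  by rewrite -det_map_mx => ->; rewrite det1 oner_neq0.
rewrite -[z](mulmxKV Xu) mulmx_sum_row.
apply: (big_ind P) => // i _; apply: PZ; rewrite rowK.
by case: (svalP (ex i)).
Qed.

End Gen.

Lemma iota_scalar (R : idomainType) (K : fieldType) (iota : {rmorphism R -> K})
  (iinj : injective iota) m (M : 'M[R]_m) (c : K) :
  map_mx iota M = c%:M -> c != 0 -> exists a, M = a%:M /\ a != 0.
Proof.
case: m M => [|m] M hM c0.
  by exists 1; split; [apply/matrixP => [[]]|exact: oner_neq0].
have e : iota (M 0 0) = c by move/matrixP: hM => /(_ 0 0); rewrite !mxE eqxx.
exists (M 0 0); split; last by apply: contra c0 => /eqP a0; rewrite -e a0 rmorph0.
apply/matrixP => i j; apply: iinj; move/matrixP: hM => /(_ i j).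
by rewrite !mxE -e => ->; rewrite rmorphMn.
Qed.

Lemma eq_rank1 (F : fieldType) m p q (X : 'M[F]_(p, m)) (Y : 'M[F]_(q, m)) :
  (X <= Y)%MS -> \rank Y = 1%N -> X != 0 -> (X == Y)%MS.
Proof.
move=> sXY rY X0; rewrite /eqmx sXY /= -(mxrank_leqif_sup sXY).2 rY.
by rewrite eqn_leq -{1}rY mxrankS //= lt0n mxrank_eq0.
Qed.

Lemma row_prop (F : fieldType) m (u v : 'rV[F]_m) : (u <= v)%MS -> exists c, u = c *: v.
Proof.
by case/submxP=> D ->; exists (D 0 0); rewrite {1}[D]mx11_scalar mul_scalar_mx.
Qed.

Section Main.
Variables (R : idomainType) (k K : fieldType).
Variables (red : {rmorphism R -> k}) (iota : {rmorphism R -> K}).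
Variable n : int -> nat.
Variables (Vu : forall i : int, 'M[R]_(n i, n (i + 1)))
          (Vl : forall i : int, 'M[R]_(n (i + 1), n i))
          (vu : forall i : int, 'M[k]_(n i, n (i + 1)))
          (vl : forall i : int, 'M[k]_(n (i + 1), n i))
          (W : forall i : int, 'M[k]_(n i)).
Hypothesis iinj : injective iota.
Variable pi : R.
Hypothesis red_surj : forall y : k, exists a : R, red a = y.
Hypothesis red_ker : forall a : R, (red a == 0) = (a \isn't a GRing.unit).
Hypothesis pi_nu : pi \isn't a GRing.unit.
Hypothesis dvr : forall a : R, a != 0 -> exists (u : R) (m : nat),
      u \is a GRing.unit /\ a = u * pi ^+ m.
Hypothesis hsm : forall i : int, map_mx red (Vu i) = vu i /\ map_mx red (Vl i) = vl i.
Hypothesis hgen : general_rep (fun i => map_mx iota (Vu i)) (fun i => map_mx iota (Vl i)).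
Hypothesis hcol : colinked vu vl.
Hypothesis hsub : subrep vu vl W.
Hypothesis hpd : pure_dim1 W.
Hypothesis hex : exact_subrep vu vl W.

Lemma scalUL i : exists a, Vu i *m Vl i = a%:M /\ a != 0.
Proof.
have [[c c0 hc] _] := hgen i; apply: (iota_scalar iinj _ c0).
by rewrite map_mxM.
Qed.

Lemma scalLU i : exists a, Vl i *m Vu i = a%:M /\ a != 0.
Proof.
have [_ [c c0 hc]] := hgen i; apply: (iota_scalar iinj _ c0).
by rewrite map_mxM.
Qed.

Lemma rels i (u : 'rV[R]_(n i)) (v : 'rV[R]_(n (i + 1))) :
  v = u *m Vu i \/ u = v *m Vl i ->
  (exists r, u *m Vu i = r *: v) /\ (exists r, v *m Vl i = r *: u).
Proof.
have [a [ha _]] := scalUL i; have [b [hb _]] := scalLU i.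
case=> ->; split.
- by exists 1; rewrite scale1r.
- by exists a; rewrite -mulmxA ha mul_mx_scalar.
- by exists b; rewrite -mulmxA hb mul_mx_scalar.
- by exists 1; rewrite scale1r.
Qed.

Lemma nconst i : n (i + 1) = n i.
Proof.
have [[c c0 hc] [d d0 hd]] := hgen i.
have rk m (e : K) : e != 0 -> \rank (e%:M : 'M[K]_m) = m.
  move=> e0; apply/eqP; have : row_free (e%:M : 'M[K]_m).
    by rewrite row_free_unit unitmxE det_scalar unitfE expf_neq0.
  by [].
apply/anti_leq/andP; split.
- by rewrite -{1}(rk (n (i + 1)) _ d0) -hd (leq_trans (mxrankM_maxl _ _)) ?rank_leq_col.
- by rewrite -{1}(rk (n i) _ c0) -hc (leq_trans (mxrankM_maxl _ _)) ?rank_leq_col.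
Qed.


Definition upd (f : forall i, 'rV[R]_(n i)) (j : int) (v : 'rV[R]_(n j)) :
  forall i, 'rV[R]_(n i) :=
  fun i => if j =P i is ReflectT e then
             eq_rect j (fun i => 'rV[R]_(n i)) v i e else f i.
Arguments upd f j v i : clear implicits.

Lemma upd_eq f j v : upd f j v j = v.
Proof.
rewrite /upd; case: eqP => // e.
by rewrite (eq_irrelevance e erefl).
Qed.

Lemma upd_neq f j v i : i != j -> upd f j v i = f i.
Proof. by move=> ij; rewrite /upd; case: eqP => // e; rewrite e eqxx in ij. Qed.

Definition redge i := W i *m vu i != 0.
Definition erel (f : forall i, 'rV[R]_(n i)) i : Prop :=
  if redge i then f (i + 1) = f i *m Vu i else f i = f (i + 1) *m Vl i.
Definition compat p q f := forall i, p <= i -> i < q -> erel f i.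
Definition good i (v : 'rV[R]_(n i)) := (map_mx red v == W i)%MS.

Lemma compat0 p q : compat p q (fun _ => 0).
Proof. by move=> i _ _; rewrite /erel; case: ifP; rewrite mul0mx. Qed.

Lemma compatD p q f g : compat p q f -> compat p q g -> compat p q (fun i => f i + g i).
Proof.
move=> cf cg i h1 h2; have := cf i h1 h2; have := cg i h1 h2.
by rewrite /erel; case: ifP => _ -> ->; rewrite mulmxDl.
Qed.

Lemma compatZ p q f c : compat p q f -> compat p q (fun i => c *: f i).
Proof.
move=> cf i h1 h2; have := cf i h1 h2.
by rewrite /erel; case: ifP => _ ->; rewrite scalemxAl.
Qed.

Lemma compat_ext p q f g : compat p q f -> (forall i, p <= i -> i <= q -> g i = f i) ->
  compat p q g.
Proof.
move=> cf e i h1 h2; have := cf i h1 h2; rewrite /erel !e //; lia.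
Qed.

Lemma compatS p q f : p <= q -> compat p q f -> erel f q -> compat p (q + 1) f.
Proof.
move=> pq cf eq i h1 h2; have [h3|h3] := ltP i q; first exact: cf.
by have -> : i = q by lia.
Qed.

Let nak := nakayama red_ker pi_nu.
Let divpi := mx_div_pi red_ker dvr.
Let lift := mx_lift red_surj.

Lemma Dlem p (d : nat) q : q = p + d%:Z ->
  forall z : 'rV[R]_(n q), exists (tau : forall i, 'rV[R]_(n i)) (s : 'rV[R]_(n (q + 1))),
    compat p q tau /\ z = tau q + s *m Vl q.
Proof.
elim: d q => [|d IH] q e.
  move=> z; exists (upd (fun i => 0) q z), 0; split; last by rewrite upd_eq mul0mx addr0.
  move=> i h1 h2; lia.
have e' : q = (p + d%:Z) + 1 by lia.
clear e; subst q; move: (IH _ erefl); set q := p + d%:Z => {}IH.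
apply: nak.
- by exists (fun _ => 0), 0; split; [exact: compat0|rewrite mul0mx addr0].
- move=> x y [t1 [s1 [c1 ->]]] [t2 [s2 [c2 ->]]].
  exists (fun i => t1 i + t2 i), (s1 + s2); split; first exact: compatD.
  by rewrite mulmxDl addrACA.
- move=> c x [t1 [s1 [c1 ->]]].
  exists (fun i => c *: t1 i), (c *: s1); split; first exact: compatZ.
  by rewrite scalerDr scalemxAl.
move=> z.
have [cq1 cq2 cq3] := hcol q.
have hz : (map_mx red z <= vl (q + 1) + vu q)%MS by rewrite (eqmxP cq3) submx1.
case/sub_addsmxP: hz => [[u1 u2]] /= hz.
have [v hv] := lift u1; have [u hu] := lift u2.
have [tau [s [ct hu']]] := IH u.
have [a [ha _]] := scalUL q.
pose c := if redge q then 1 else a.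
pose tau' := upd (fun i => c *: tau i) (q + 1) (tau q *m Vu q).
have [y1 e1] : exists y1, s *m (Vl q *m Vu q) = pi *: y1.
  by apply: divpi; rewrite map_mxM map_mxM (hsm q).1 (hsm q).2 cq2 mulmx0.
have [y2 e2] : exists y2, z - (u *m Vu q + v *m Vl (q + 1)) = pi *: y2.
  apply: divpi; rewrite map_mxB map_mxD !map_mxM hu hv (hsm q).1 (hsm (q + 1)).2 hz.
  by rewrite (addrC (u1 *m vl (q + 1))) subrr.
exists (tau' (q + 1) + v *m Vl (q + 1)), (y1 + y2); split.
  exists tau', v; split => //; apply: compatS; first lia.
    apply: (compat_ext (compatZ c ct)) => i h1 h2; rewrite /tau' upd_neq //; apply/eqP; lia.
  rewrite /erel /tau' (@upd_eq (fun i => c *: tau i) (q + 1) (tau q *m Vu q)).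
  rewrite (@upd_neq (fun i => c *: tau i) (q + 1) (tau q *m Vu q) q); last by apply/eqP; lia.
  rewrite /c; case: ifP => ->; first by rewrite scale1r.
  by rewrite -mulmxA ha mul_mx_scalar.
move/eqP: e2; rewrite subr_eq => /eqP ->.
rewrite /tau' (@upd_eq (fun i => c *: tau i) (q + 1) (tau q *m Vu q)).
rewrite hu' mulmxDl -mulmxA e1 scalerDr.
by apply/rowP => j; rewrite !mxE; ring.
Qed.

Let mpi := map_pi red_ker pi_nu.

Lemma W_neq0 i : W i != 0.
Proof. by rewrite -mxrank_eq0 hpd. Qed.

Lemma wgen i : (nz_row (W i) == W i)%MS.
Proof. by apply: eq_rank1; rewrite ?nz_row_sub ?hpd ?nz_row_eq0 ?W_neq0. Qed.

Lemma good_neq0 i (v : 'rV[R]_(n i)) : good v -> map_mx red v != 0.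
Proof.
move=> gv; apply/eqP => v0; move: gv; rewrite /good v0 => /andP[_].
by move/submx0null/eqP; rewrite (negbTE (W_neq0 i)).
Qed.

Lemma Win p (d : nat) q : q = p + d%:Z ->
  exists g : forall i, 'rV[R]_(n i),
    (forall i, p <= i -> i <= q -> good (g i)) /\ compat p q g.
Proof.
elim: d q => [|d IH] q e.
  have [h hh] := lift (nz_row (W p)).
  exists (upd (fun _ => 0) p h); split; last by move=> i h1 h2; lia.
  move=> i h1 h2; have -> : i = p by lia.
  by rewrite /good (@upd_eq (fun _ => 0) p h) hh wgen.
have e' : q = (p + d%:Z) + 1 by lia.
clear e; subst q; have [g [gg cg]] := IH _ erefl; set q := p + d%:Z.
have gq := gg q (_ : p <= q) (lexx q); have {}gq : good (g q) by apply: gq; lia.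
case hr: (redge q).
  exists (upd g (q + 1) (g q *m Vu q)); split.
    move=> i h1 h2; have [h3|h3] := ltP q i.
      have -> : i = q + 1 by lia.
      rewrite /good (@upd_eq g (q + 1) (g q *m Vu q)) map_mxM (hsm q).1.
      apply/eqmxP; apply: eqmx_trans (eqmxMr _ (eqmxP gq)) _; apply/eqmxP.
      apply: eq_rank1; first exact: (hsub q).1.
        exact: hpd.
      exact: hr.
    rewrite (@upd_neq g (q + 1) _ i); last by apply/eqP; lia.
    apply: gg => //.
  apply: compatS; first lia.
    apply: (compat_ext cg) => i h1 h2; rewrite upd_neq //; apply/eqP; lia.
  rewrite /erel hr (@upd_eq g (q + 1) (g q *m Vu q)) upd_neq //; apply/eqP; lia.
have hk : (W q <= kermx (vu q))%MS by rewrite sub_kermx; move/negbT: hr; rewrite negbK.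
have /capmx_idPl hc := hk.
have eW : (W q :=: W (q + 1) *m vl q)%MS := eqmx_trans (eqmx_sym hc) (eqmxP (hex q).1).
have [h hh] := lift (nz_row (W (q + 1))).
have hv : (map_mx red (h *m Vl q) == W q)%MS.
  rewrite map_mxM hh (hsm q).2; apply/eqmxP.
  apply: eqmx_trans (eqmxMr _ (eqmxP (wgen _))) _; exact: eqmx_sym eW.
have [cb ecb] : exists cb, map_mx red (g q) = cb *: map_mx red (h *m Vl q).
  by apply: row_prop; rewrite (eqmxP hv); case/andP: gq.
have cb0 : cb != 0.
  by apply: contraNneq (good_neq0 gq) => c0; rewrite ecb c0 scale0r.
have [lam hlam] := red_surj cb.
have [z0 ez0] : exists z0, g q - lam *: (h *m Vl q) = pi *: z0.
  by apply: divpi; rewrite map_mxB map_mxZ hlam -ecb subrr.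
have [tau [s [ct hz0]]] := @Dlem p d q erefl z0.
exists (upd (fun i => g i + (- pi) *: tau i) (q + 1) (lam *: h + pi *: s)); split.
  move=> i h1 h2; have [h3|h3] := ltP q i.
    have -> : i = q + 1 by lia.
    rewrite /good (@upd_eq (fun i => g i + (- pi) *: tau i) (q + 1) (lam *: h + pi *: s)).
    rewrite map_mxD mpi addr0 map_mxZ hlam hh.
    apply/eqmxP; apply: eqmx_trans (eqmx_scale _ cb0) _; apply/eqmxP; exact: wgen.
  rewrite (@upd_neq (fun i => g i + (- pi) *: tau i) (q + 1) _ i); last by apply/eqP; lia.
  by rewrite /good map_mxD scaleNr -scalerN mpi addr0; apply: gg.
apply: compatS; first lia.
  apply: (compat_ext (compatD cg (compatZ (- pi) ct))) => i h1 h2.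
  by rewrite upd_neq //; apply/eqP; lia.
rewrite /erel hr (@upd_eq (fun i => g i + (- pi) *: tau i) (q + 1) (lam *: h + pi *: s)).
rewrite upd_neq; last by apply/eqP; lia.
move/eqP: ez0; rewrite subr_eq => /eqP ->; rewrite hz0.
rewrite mulmxDl -!scalemxAl.
by apply/rowP => j; rewrite !mxE; ring.
Qed.

Lemma inj_free a b (M : 'M[k]_(a, b)) : (forall x : 'rV_a, x *m M = 0 -> x = 0) -> row_free M.
Proof.
move=> hM; rewrite -kermx_eq0; apply/eqP/eqP; rewrite -nz_row_eq0; apply/eqP.
by apply: hM; apply/sub_kermxP; exact: nz_row_sub.
Qed.

Lemma extL i : (forall x : 'rV[k]_(n i), x *m vu i = 0 -> x = 0) ->
  forall y : 'rV[R]_(n (i + 1)), good y -> exists x, x *m Vu i = y /\ good x.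
Proof.
move=> hinj y gy; have rf := inj_free hinj.
have rfull : row_full (vu i).
  have rk : \rank (vu i) = n i by apply/eqP.
  by rewrite /row_full; apply/eqP; rewrite rk nconst.
have [x ex] : exists x, y = x *m Vu i.
  apply: (nak (P := fun y => exists x, y = x *m Vu i)).
  - by exists 0; rewrite mul0mx.
  - by move=> ? ? [x1 ->] [x2 ->]; exists (x1 + x2); rewrite mulmxDl.
  - by move=> c ? [x1 ->]; exists (c *: x1); rewrite scalemxAl.
  move=> z; have /submxP [D eD] := submx_full (map_mx red z) rfull.
  have [x hx] := lift D.
  have [w ew] : exists w, z - x *m Vu i = pi *: w.
    by apply: divpi; rewrite map_mxB map_mxM hx (hsm i).1 eD subrr.
  exists (x *m Vu i), w; split; first by exists x.
  by rewrite -ew addrCA subrr addr0.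
exists x; split; first by [].
have hW : (W i *m vu i :=: W (i + 1))%MS.
  apply/eqmxP/eq_rank1; [exact: (hsub i).1|exact: hpd|].
  by rewrite mulmx_free_eq0 // W_neq0.
apply/eqmxP; apply: (eqmxMfree rf); apply: eqmx_trans _ (eqmx_sym hW).
by rewrite -(hsm i).1 -map_mxM -ex; apply/eqmxP.
Qed.

Lemma extR i : (forall x : 'rV[k]_(n (i + 1)), x *m vl i = 0 -> x = 0) ->
  forall y : 'rV[R]_(n i), good y -> exists x : 'rV[R]_(n (i + 1)), x *m Vl i = y /\ good x.
Proof.
move=> hinj y gy; have rf := inj_free hinj.
have rfull : row_full (vl i).
  have rk : \rank (vl i) = n (i + 1) by apply/eqP.
  by rewrite /row_full; apply/eqP; rewrite rk nconst.
have [x ex] : exists x, y = x *m Vl i.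
  apply: (nak (P := fun y => exists x, y = x *m Vl i)).
  - by exists 0; rewrite mul0mx.
  - by move=> ? ? [x1 ->] [x2 ->]; exists (x1 + x2); rewrite mulmxDl.
  - by move=> c ? [x1 ->]; exists (c *: x1); rewrite scalemxAl.
  move=> z; have /submxP [D eD] := submx_full (map_mx red z) rfull.
  have [x hx] := lift D.
  have [w ew] : exists w, z - x *m Vl i = pi *: w.
    by apply: divpi; rewrite map_mxB map_mxM hx (hsm i).2 eD subrr.
  exists (x *m Vl i), w; split; first by exists x.
  by rewrite -ew addrCA subrr addr0.
exists x; split; first by [].
have hW : (W (i + 1) *m vl i :=: W i)%MS.
  apply/eqmxP/eq_rank1; [exact: (hsub i).2|exact: hpd|].
  by rewrite mulmx_free_eq0 // W_neq0.
apply/eqmxP; apply: (eqmxMfree rf); apply: eqmx_trans _ (eqmx_sym hW).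
by rewrite -(hsm i).2 -map_mxM -ex; apply/eqmxP.
Qed.

Lemma injU i (x x' : 'rV[R]_(n i)) : x *m Vu i = x' *m Vu i -> x = x'.
Proof.
move=> e; have [a [ha a0]] := scalUL i.
have : (x - x') *m (Vu i *m Vl i) = 0.
  by rewrite mulmxA mulmxBl e subrr mul0mx.
rewrite ha mul_mx_scalar => /eqP; rewrite scalemx_eq0 (negbTE a0) /= subr_eq0.
by move/eqP.
Qed.

Lemma injL i (x x' : 'rV[R]_(n (i + 1))) : x *m Vl i = x' *m Vl i -> x = x'.
Proof.
move=> e; have [a [ha a0]] := scalLU i.
have : (x - x') *m (Vl i *m Vu i) = 0.
  by rewrite mulmxA mulmxBl e subrr mul0mx.
rewrite ha mul_mx_scalar => /eqP; rewrite scalemx_eq0 (negbTE a0) /= subr_eq0.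
by move/eqP.
Qed.

Definition famP A B (g : forall i, 'rV[R]_(n i)) (d : nat) (f : forall i, 'rV[R]_(n i)) :=
  [/\ (forall i, A <= i -> i <= B -> f i = g i),
      (forall i, A - d%:Z <= i -> i < A -> f i *m Vu i = f (i + 1)),
      (forall i, B <= i -> i < B + d%:Z -> f (i + 1) *m Vl i = f i) &
      (forall i, A - d%:Z <= i -> i <= B + d%:Z -> good (f i))].

Lemma Fam A B (g : forall i, 'rV[R]_(n i)) :
  (forall i, A <= i -> i <= B -> good (g i)) ->
  (forall i, i < A -> forall x : 'rV[k]_(n i), x *m vu i = 0 -> x = 0) ->
  (forall i, B <= i -> forall x : 'rV[k]_(n (i + 1)), x *m vl i = 0 -> x = 0) ->
  A <= B -> forall d : nat, exists f, famP A B g d f.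
Proof.
move=> gg iL iR AB; elim=> [|d [f [f1 f2 f3 f4]]].
  exists g; split => // i h1 h2; try lia; apply: gg; lia.
pose l := A - d%:Z - 1; pose r := B + d%:Z.
have gl : good (f (l + 1)) by apply: f4; rewrite /l; lia.
have hl : l < A by rewrite /l; lia.
have [xL [exL gxL]] := extL (iL l hl) gl.
have gr : good (f r) by apply: f4; rewrite /r; lia.
have hr : B <= r by rewrite /r; lia.
have [xR [exR gxR]] := extR (iR r hr) gr.
have lr : l != r + 1 by apply/eqP; rewrite /l /r; lia.
pose f' := upd (upd f l xL) (r + 1) xR.
have fl : f' l = xL by rewrite /f' upd_neq // (@upd_eq f l xL).
have fr : f' (r + 1) = xR by rewrite /f' (@upd_eq _ (r + 1) xR).
have fo : forall i, i != l -> i != r + 1 -> f' i = f i.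
  by move=> i h1 h2; rewrite /f' !upd_neq.
exists f'; split.
- move=> i h1 h2; rewrite fo ?f1 //; apply/eqP; rewrite /l /r; lia.
- move=> i h1 h2; have [->|il] := eqVneq i l.
    rewrite fl exL fo //; apply/eqP; rewrite /l /r; lia.
  rewrite !fo ?f2 //; apply/eqP; rewrite /l /r; move/eqP: il; rewrite /l; lia.
- move=> i h1 h2; have [->|ir] := eqVneq i r.
    by rewrite fr exR fo //; apply/eqP; rewrite /l /r; lia.
  rewrite !fo ?f3 //; apply/eqP; rewrite /l /r; move/eqP: ir; rewrite /r; lia.
- move=> i h1 h2; have [->|il] := eqVneq i l; first by rewrite fl.
  have [->|ir] := eqVneq i (r + 1); first by rewrite fr.
  rewrite fo //; apply: f4; move/eqP: il; move/eqP: ir; rewrite /l /r; lia.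
Qed.

Lemma famU A B g d1 d2 f1 f2 : A <= B -> famP A B g d1 f1 -> famP A B g d2 f2 ->
  forall i, A - d1%:Z <= i -> A - d2%:Z <= i -> i <= B + d1%:Z -> i <= B + d2%:Z ->
  f1 i = f2 i.
Proof.
move=> AB [a1 a2 a3 a4] [b1 b2 b3 b4] i h1 h2 h3 h4.
have [hiA|hiA] := ltP i A.
  have key : forall e : nat, forall j, j = A - e%:Z -> A - d1%:Z <= j -> A - d2%:Z <= j ->
      f1 j = f2 j.
    elim=> [|e IH] j ej l1 l2.
      by rewrite a1 ?b1 //; lia.
    apply: injU; rewrite a2 ?b2; try lia.
    by apply: IH; lia.
  by apply: (key (absz (A - i))); lia.
have [hiB|hiB] := lerP i B; first by rewrite a1 ?b1.
have key : forall e : nat, forall j, j = B + e%:Z -> j <= B + d1%:Z -> j <= B + d2%:Z ->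
    f1 j = f2 j.
  elim=> [|e IH] j ej l1 l2.
    by rewrite a1 ?b1 //; lia.
  have ej' : j = (B + e%:Z) + 1 by lia.
  clear ej; subst j; apply: (@injL (B + e%:Z)); rewrite a3 ?b3; try lia.
  by apply: IH; lia.
by apply: (key (absz (i - B))); lia.
Qed.

Lemma main_sec A B :
  A <= B ->
  (forall i, i < A -> forall x : 'rV[k]_(n i), x *m vu i = 0 -> x = 0) ->
  (forall i, B <= i -> forall x : 'rV[k]_(n (i + 1)), x *m vl i = 0 -> x = 0) ->
  exists x : forall i : int, 'rV[R]_(n i),
    forall i : int,
      [/\ (map_mx red (x i) == W i)%MS,
          exists r : R, x i *m Vu i = r *: x (i + 1)
        & exists r : R, x (i + 1) *m Vl i = r *: x i].
Proof.
move=> AB iL iR.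
have eB : B = A + (absz (B - A))%:Z by lia.
have [g [gg cg]] := Win eB.
have FF := Fam gg iL iR AB.
pose F d := sval (constructive_indefinite_description _ (FF d)).
have FP d : famP A B g d (F d) := svalP (constructive_indefinite_description _ (FF d)).
pose Kf (i : int) := (absz i + absz A + absz B + 1)%N.
exists (fun i => F (Kf i) i) => i /=.
pose d := (Kf i + Kf (i + 1)%R)%N; pose f := F d.
have e1 : F (Kf i) i = f i by apply: (famU AB (FP _) (FP _)); rewrite /d /Kf; lia.
have e2 : F (Kf (i + 1)) (i + 1) = f (i + 1).
  by apply: (famU AB (FP _) (FP _)); rewrite /d /Kf; lia.
rewrite e1 e2; case: (FP d) => f1 f2 f3 f4.
have rel : f (i + 1) = f i *m Vu i \/ f i = f (i + 1) *m Vl i.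
  have [hA|hA] := ltP i A; first by left; rewrite f2 //; rewrite /d /Kf; lia.
  have [hB|hB] := ltP i B.
    have := cg i hA hB; rewrite /erel /f !f1 //; try lia.
    by case: ifP => _ ->; [left|right].
  by right; rewrite f3 //; rewrite /d /Kf; lia.
have [r1 r2] := rels rel; split => //.
by apply: f4; rewrite /d /Kf; lia.
Qed.

End Main.

Lemma fwd_zero (F : fieldType) (n : int -> nat)
  (vu : forall i : int, 'M[F]_(n i, n (i + 1))) (vl : forall i : int, 'M[F]_(n (i + 1), n i))
  (i j : int) (x : 'rV[F]_(n i)) :
  i < j -> x *m vu i = 0 -> tagged (comp_at vu vl j x) = 0.
Proof.
move=> ij hx; rewrite /comp_at (ltW ij).
have [m ->] : exists m, absz (j - i) = m.+1 by exists (absz (j - i)).-1; lia.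
rewrite iterSr.
have : tagged (fstep vu (Tagged (fun i => 'rV[F]_(n i)) x)) = 0 by rewrite /fstep /= hx.
elim: m (fstep _ _) => [|m IH] s //= hs.
by rewrite /fstep /= IH // mul0mx.
Qed.

Lemma bcast0 (F : fieldType) (n : int -> nat) (i : int) : bcast (0 : 'rV[F]_(n i)) = 0.
Proof. by apply/matrixP => a b; rewrite castmxE !mxE. Qed.

Lemma bwd_zero (F : fieldType) (n : int -> nat)
  (vu : forall i : int, 'M[F]_(n i, n (i + 1))) (vl : forall i : int, 'M[F]_(n (i + 1), n i))
  (m j : int) (y : 'rV[F]_(n m)) :
  j < m -> bcast y *m vl (m - 1) = 0 -> tagged (comp_at vu vl j y) = 0.
Proof.
move=> jm hy; rewrite /comp_at (negbTE (_ : ~~ (m <= j))); last by rewrite -ltNge.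
have [t ->] : exists t, absz (j - m) = t.+1 by exists (absz (j - m)).-1; lia.
rewrite iterSr.
have : tagged (bstep vl (Tagged (fun i => 'rV[F]_(n i)) y)) = 0 by rewrite /bstep /= hy.
elim: t (bstep _ _) => [|t IH] s //= hs.
by rewrite /bstep /= IH // bcast0 mul0mx.
Qed.

Lemma bwd_inj (F : fieldType) (n : int -> nat)
  (vl : forall i : int, 'M[F]_(n (i + 1), n i)) (m : int) :
  (forall y : 'rV[F]_(n m), y != 0 -> bcast y *m vl (m - 1) != 0) ->
  forall x : 'rV[F]_(n (m - 1 + 1)), x *m vl (m - 1) = 0 -> x = 0.
Proof.
move=> h x hx.
pose y : 'rV[F]_(n m) := castmx (erefl, congr1 n (subrK 1 m)) x.
have by_ : bcast y = x.
  by rewrite /bcast /y castmx_comp castmx_id.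
apply/eqP; apply/negPn/negP => x0.
have y0 : y != 0 by apply: contraNneq x0 => y0; rewrite -by_ y0 bcast0.
by move: (h y y0); rewrite by_ hx eqxx.
Qed.

Lemma sum_bound (H : seq int) j : j \in H -> (absz j <= \sum_(h <- H) absz h)%N.
Proof.
elim: H => [//|h t IH]; rewrite in_cons big_cons => /orP[/eqP->|/IH]; first exact: leq_addr.
by move/leq_trans; apply; exact: leq_addl.
Qed.

Theorem lemma4p1 (R : idomainType) (k K : fieldType)
  (red : {rmorphism R -> k}) (iota : {rmorphism R -> K}) (n : int -> nat)
  (Vu : forall i : int, 'M[R]_(n i, n (i + 1)))
  (Vl : forall i : int, 'M[R]_(n (i + 1), n i))
  (vu : forall i : int, 'M[k]_(n i, n (i + 1)))
  (vl : forall i : int, 'M[k]_(n (i + 1), n i))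
  (H : seq int) (W : forall i : int, 'M[k]_(n i)) :
  is_DVR R -> residue_map red -> fraction_map iota ->
  smoothing red iota Vu Vl vu vl ->
  colinked vu vl -> finite_cosupport vu vl H ->
  subrep vu vl W -> pure_dim1 W -> exact_subrep vu vl W ->
  exists x : forall i : int, 'rV[R]_(n i),
    forall i : int,
      [/\ (map_mx red (x i) == W i)%MS,
          exists r : R, x i *m Vu i = r *: x (i + 1)
        & exists r : R, x (i + 1) *m Vl i = r *: x i].
Proof.
move=> [pi [_ pinu dvr]] [rsurj rker] [iinj _] [hsm hgen] hcol hfc hsub hpd hex.
pose S := (\sum_(h <- H) absz h)%N.
apply: (main_sec iinj rsurj rker pinu dvr hsm hgen hcol hsub hpd hex
         (A := - S%:Z) (B := S%:Z)).
- lia.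
- move=> i hi x hx; have [j jH cj] := hfc i.
  have hj := sum_bound jH; have ij : i < j by rewrite /S in hi; lia.
  apply/eqP; apply/negPn/negP => x0.
  by move: (cj x x0); rewrite (fwd_zero vl ij hx) eqxx.
- move=> i hi; have [j jH cj] := hfc (i + 1).
  have hj := sum_bound jH; have ij : j < i + 1 by rewrite /S in hi; lia.
  have h : forall x : 'rV_(n (i + 1 - 1 + 1)), x *m vl (i + 1 - 1) = 0 -> x = 0.
    apply: bwd_inj => y y0; apply/eqP => hy.
    by move: (cj y y0); rewrite (bwd_zero vu ij hy) eqxx.
  have e : i + 1 - 1 = i by lia.
  by rewrite e in h.
Qed.
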